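(* The function $n \mapsto \mathrm{vol}(L(n))$, for integers $n \geq 5$, is increasing. Here $$\mathrm{vol}(L(n)) = \frac{n}{2}\Big(2\Lambda(\theta_n) + \Lambda(\theta_n + \tfrac{\pi}{n}) + \Lambda(\theta_n - \tfrac{\pi}{n}) - \Lambda(2\theta_n - \tfrac{\pi}{2})\Big),$$ with $$\theta_n = \frac{\pi}{2} - \arccos\Big(\frac{1}{2\cos(\pi/n)}\Big), \qquad \Lambda(z) = -\int_0^z \log|2\sin t|\,dt.$$
   Context: $L(n)$, $n\ge5$, is the $n$-th L\''obell polyhedron, realized as a compact right-angled hyperbolic polyhedron in $\mathbb{H}^3$. Combinatorially it consists of two pentagonal flowers (an $n$-gon surrounded cyclically by $n$ pentagons) glued along their boundaries so that the 1-skeleton is trivalent. The volume formula displayed is Vesnin's known formula for its hyperbolic volume. *)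

(* Defs.v *)
From Stdlib Require Import Reals ClassicalEpsilon.
Open Scope R_scope.

(* Oriented Riemann integral as a relation: [v] is the Riemann integral of [f]
   from [a] to [b] (Stdlib allows [b < a], giving the oriented integral). *)
Definition is_RInt (f : R -> R) (a b v : R) : Prop :=
  exists pr : Riemann_integrable f a b, RiemannInt pr = v.

(* Integrand of the Lobachevsky function, truncated from below at -M so that
   it is bounded (hence Riemann integrable). *)
Definition lob_integrand (t : R) : R := ln (Rabs (2 * sin t)).
Definition lob_trunc (M : nat) (t : R) : R := Rmax (lob_integrand t) (- INR M).

(* [l] is the (Lebesgue / improper) integral of log|2 sin t| over [0,z]:
   limit, as M -> oo, of the integrals of the truncations (monotone
   convergence; the integrand is bounded above by ln 2). *)
Definition lob_integral_spec (z l : R) : Prop :=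
  exists v : nat -> R,
    (forall M, is_RInt (lob_trunc M) 0 z (v M)) /\ Un_cv v l.

Definition Lobachevsky (z : R) : R :=
  - epsilon (inhabits 0) (fun l => lob_integral_spec z l).

Definition theta (n : nat) : R :=
  PI / 2 - acos (1 / (2 * cos (PI / INR n))).

Definition vol_Lobell (n : nat) : R :=
  INR n / 2 *
  (2 * Lobachevsky (theta n)
   + Lobachevsky (theta n + PI / INR n)
   + Lobachevsky (theta n - PI / INR n)
   - Lobachevsky (2 * theta n - PI / 2)).

(* Main.v *)
Require Import Defs.
From Stdlib Require Import Reals ClassicalEpsilon.
From Stdlib Require Import Lra Lia RList Machin Ratan.
Open Scope R_scope.


Lemma is_RInt_unique f a b v w : is_RInt f a b v -> is_RInt f a b w -> v = w.
Proof. intros [p1 <-] [p2 <-]. apply RiemannInt_P5. Qed.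

Lemma is_RInt_cont f a b :
  (forall x, Rmin a b <= x <= Rmax a b -> continuity_pt f x) -> exists v, is_RInt f a b v.
Proof.
  intros H. destruct (Rle_dec a b) as [h|h].
  - assert (pr : Riemann_integrable f a b).
    { apply continuity_implies_RiemannInt; auto. intros x Hx; apply H.
      rewrite Rmin_left, Rmax_right; lra. }
    exists (RiemannInt pr), pr; reflexivity.
  - assert (pr : Riemann_integrable f b a).
    { apply continuity_implies_RiemannInt; [lra|]. intros x Hx; apply H.
      rewrite Rmin_right, Rmax_left; lra. }
    exists (RiemannInt (RiemannInt_P1 pr)), (RiemannInt_P1 pr); reflexivity.
Qed.

Lemma is_RInt_chasles f a b c v1 v2 :
  is_RInt f a b v1 -> is_RInt f b c v2 -> is_RInt f a c (v1 + v2).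
Proof.
  intros [p1 <-] [p2 <-]. exists (RiemannInt_P24 p1 p2).
  symmetry; apply RiemannInt_P26.
Qed.

Lemma is_RInt_swap f a b v : is_RInt f a b v -> is_RInt f b a (- v).
Proof.
  intros [p <-]. exists (RiemannInt_P1 p). rewrite (RiemannInt_P8 p (RiemannInt_P1 p)). ring.
Qed.

Lemma is_RInt_le f g a b v w : a <= b -> is_RInt f a b v -> is_RInt g a b w ->
  (forall x, a < x < b -> f x <= g x) -> v <= w.
Proof. intros h [p1 <-] [p2 <-] H. apply RiemannInt_P19; auto. Qed.

Lemma is_RInt_const c a b : is_RInt (fun _ => c) a b (c * (b - a)).
Proof. exists (RiemannInt_P14 a b c). apply RiemannInt_P15. Qed.

Lemma is_RInt_ext f g a b v : (forall x, Rmin a b <= x <= Rmax a b -> f x = g x) ->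
  is_RInt f a b v -> is_RInt g a b v.
Proof.
  intros H [p <-]. exists (Riemann_integrable_ext g H p).
  destruct (Rle_dec a b).
  - apply RiemannInt_P18; auto. intros x Hx; symmetry; apply H.
    rewrite Rmin_left, Rmax_right; lra.
  - rewrite (RiemannInt_P8 p (RiemannInt_P1 p)).
    rewrite (RiemannInt_P8 (Riemann_integrable_ext g H p)
       (RiemannInt_P1 (Riemann_integrable_ext g H p))).
    f_equal. apply RiemannInt_P18; [lra|]. intros x Hx; symmetry; apply H.
    rewrite Rmin_right, Rmax_left; lra.
Qed.

Lemma zero_open_step (h : R -> R) a b :
  (forall x, Rmin a b < x < Rmax a b -> h x = 0) -> IsStepFun h a b.
Proof.
  intros H. exists (cons (Rmin a b) (cons (Rmax a b) nil)). exists (cons 0 nil).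
  unfold adapted_couple; repeat split.
  - unfold ordered_Rlist; intros i Hi; simpl in Hi.
    destruct i; [|lia]. simpl. apply Rle_trans with a; [apply Rmin_l|apply Rmax_l].
  - intros i Hi; simpl in Hi. destruct i; [|lia].
    unfold constant_D_eq, open_interval; intros x Hx. simpl in Hx |- *. apply H; auto.
Qed.

Lemma zero_open_int h a b (H : forall x, Rmin a b < x < Rmax a b -> h x = 0) :
  Riemann_integrable h a b.
Proof.
  intro eps. exists (mkStepFun (zero_open_step h a b H)).
  exists (mkStepFun (StepFun_P4 a b 0)). split.
  - intros t _. simpl. unfold fct_cte. rewrite Rminus_diag, Rabs_R0; lra.
  - rewrite StepFun_P18, Rmult_0_l, Rabs_R0. apply cond_pos.
Qed.

Lemma zero_open_val h a b (H : forall x, Rmin a b < x < Rmax a b -> h x = 0) :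
  is_RInt h a b 0.
Proof.
  exists (zero_open_int h a b H).
  destruct (Rle_dec a b).
  - rewrite (RiemannInt_P18 (zero_open_int h a b H) (RiemannInt_P14 a b 0)); auto.
    + rewrite RiemannInt_P15; ring.
    + intros x Hx; unfold fct_cte; apply H. rewrite Rmin_left, Rmax_right; lra.
  - rewrite (RiemannInt_P8 _ (RiemannInt_P1 (zero_open_int h a b H))).
    rewrite (RiemannInt_P18 (RiemannInt_P1 (zero_open_int h a b H)) (RiemannInt_P14 b a 0)); [|lra|].
    + rewrite RiemannInt_P15; ring.
    + intros x Hx; unfold fct_cte; apply H. rewrite Rmin_right, Rmax_left; lra.
Qed.

Lemma is_RInt_lin f g a b l v w : is_RInt f a b v -> is_RInt g a b w ->
  is_RInt (fun x => f x + l * g x) a b (v + l * w).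
Proof.
  intros [p <-] [q <-]. exists (RiemannInt_P10 l p q). apply RiemannInt_P13.
Qed.

Lemma is_RInt_ext_open f g a b v : (forall x, Rmin a b < x < Rmax a b -> f x = g x) ->
  is_RInt f a b v -> is_RInt g a b v.
Proof.
  intros H Hf.
  assert (Hh := zero_open_val (fun x => g x - f x) a b).
  assert (Hs := is_RInt_lin _ _ a b 1 _ _ Hf (Hh ltac:(intros x Hx; cbv beta; rewrite (H x Hx); ring))).
  replace v with (v + 1 * 0) by ring.
  revert Hs; apply is_RInt_ext. intros; ring.
Qed.

Lemma FTC_gen f F a b : a <= b -> (forall x, a <= x <= b -> continuity_pt f x) ->
  (forall x, a <= x <= b -> derivable_pt_lim F x (f x)) -> is_RInt f a b (F b - F a).
Proof.
  intros hab C D.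
  assert (A1 : antiderivative f F a b).
  { split; [|exact hab]. intros x Hx. exists (exist _ (f x) (D x Hx)). reflexivity. }
  pose proof (RiemannInt_P29 hab C) as A2.
  destruct (antiderivative_Ucte f F _ a b A1 A2) as [c Hc].
  exists (FTC_P1 hab C hab (Rle_refl b)).
  rewrite (RiemannInt_P20 hab (FTC_P1 hab C) (FTC_P1 hab C hab (Rle_refl b))).
  rewrite (Hc b), (Hc a); try lra.
Qed.

Lemma ln_le x y : 0 < x -> x <= y -> ln x <= ln y.
Proof. intros hx [h|h]; [left; apply ln_increasing; auto | subst; lra]. Qed.

Lemma cont_Rmax f g x : continuity_pt f x -> continuity_pt g x ->
  continuity_pt (fun t => Rmax (f t) (g t)) x.
Proof.
  intros Hf Hg.
  assert (E : forall t, Rmax (f t) (g t) = / 2 * (f t + g t + Rabs (f t - g t))).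
  { intros t; unfold Rmax; destruct (Rle_dec (f t) (g t)).
    - rewrite Rabs_left1; lra.
    - rewrite Rabs_right; lra. }
  apply continuity_pt_locally_ext with (f := fun t => / 2 * (f t + g t + Rabs (f t - g t))) (a := 1);
   [lra| intros; rewrite E; auto |].
  apply (continuity_pt_scal (fun t => f t + g t + Rabs (f t - g t)) (/2) x).
  apply (continuity_pt_plus (fun t => f t + g t) (fun t => Rabs (f t - g t))).
  - apply (continuity_pt_plus f g); auto.
  - apply (continuity_pt_comp (fun t => f t - g t) Rabs).
    + apply (continuity_pt_minus f g); auto.
    + apply Rcontinuity_abs.
Qed.

Lemma cont_ln f x : continuity_pt f x -> 0 < f x -> continuity_pt (fun t => ln (f t)) x.
Proof.
  intros Hf Hp. apply (continuity_pt_comp f ln); auto.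
  apply derivable_continuous_pt. exists (/ f x). apply derivable_pt_lim_ln; auto.
Qed.

Lemma cont_abs2sin x : continuity_pt (fun t => Rabs (2 * sin t)) x.
Proof.
  apply (continuity_pt_comp (fun t => 2 * sin t) Rabs).
  - apply (continuity_pt_scal sin 2 x). apply continuity_sin.
  - apply Rcontinuity_abs.
Qed.

Definition gM (M : nat) (t : R) : R := ln (Rmax (Rabs (2 * sin t)) (exp (- INR M))).

Lemma gM_cont M x : continuity_pt (gM M) x.
Proof.
  unfold gM. apply cont_ln.
  - apply (cont_Rmax (fun t => Rabs (2 * sin t)) (fun _ => exp (- INR M))).
    + apply cont_abs2sin.
    + apply continuity_pt_const. intros a b; reflexivity.
  - apply Rlt_le_trans with (exp (- INR M)); [apply exp_pos| apply Rmax_r].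
Qed.

Lemma trunc_eq M t : sin t <> 0 -> lob_trunc M t = gM M t.
Proof.
  intros hs. unfold lob_trunc, lob_integrand, gM.
  assert (ha : 0 < Rabs (2 * sin t)) by (apply Rabs_pos_lt; intro h; apply hs; lra).
  pose proof (exp_pos (- INR M)) as he.
  unfold Rmax at 2. destruct (Rle_dec (Rabs (2 * sin t)) (exp (- INR M))) as [h|h].
  - rewrite ln_exp. apply Rmax_right. rewrite <- (ln_exp (- INR M)). apply ln_le; auto.
  - apply Rmax_left. rewrite <- (ln_exp (- INR M)). apply ln_le; auto; lra.
Qed.

Lemma sin_nz t : -PI < t < PI -> t <> 0 -> sin t <> 0.
Proof.
  intros [h1 h2] h0. destruct (Rlt_or_le 0 t).
  - pose proof (sin_gt_0 t H h2); lra.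
  - assert (t < 0) by lra. pose proof (sin_lt_0_var t h1 H0); lra.
Qed.

Lemma gM_exists M z : exists v, is_RInt (gM M) 0 z v.
Proof. apply is_RInt_cont. intros; apply gM_cont. Qed.

Definition IG (M : nat) (z : R) : R := epsilon (inhabits 0) (fun v => is_RInt (gM M) 0 z v).

Lemma IG_spec M z : is_RInt (gM M) 0 z (IG M z).
Proof. unfold IG. apply epsilon_spec. apply gM_exists. Qed.

Lemma IG_trunc M z : -PI < z < PI -> is_RInt (lob_trunc M) 0 z (IG M z).
Proof.
  intros hz. apply is_RInt_ext_open with (gM M); [|apply IG_spec].
  intros x [h1 h2]. symmetry. apply trunc_eq. apply sin_nz.
  - split.
    + apply Rle_lt_trans with (Rmin 0 z); auto. unfold Rmin; destruct (Rle_dec 0 z); lra.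
    + apply Rlt_le_trans with (Rmax 0 z); auto. unfold Rmax; destruct (Rle_dec 0 z); lra.
  - intro; subst. unfold Rmin, Rmax in *; destruct (Rle_dec 0 z); lra.
Qed.

Lemma Un_cv_ext_ev (u v : nat -> R) l N : (forall n, (n >= N)%nat -> u n = v n) ->
  Un_cv u l -> Un_cv v l.
Proof.
  intros E H eps he. destruct (H eps he) as [N1 HN1]. exists (max N N1).
  intros n hn. rewrite <- E by lia. apply HN1; lia.
Qed.

Lemma Lob_char z l : -PI < z < PI -> Un_cv (fun M => IG M z) l -> Lobachevsky z = - l.
Proof.
  intros hz Hl. unfold Lobachevsky. f_equal.
  assert (Ex : exists l', lob_integral_spec z l').
  { exists l, (fun M => IG M z). split; auto. intros M; apply IG_trunc; auto. }
  pose proof (epsilon_spec (inhabits 0) _ Ex) as [v [Hv Hcv]].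
  set (l0 := epsilon (inhabits 0) (fun l => lob_integral_spec z l)) in *.
  apply UL_sequence with v; auto.
  apply Un_cv_ext_ev with (fun M => IG M z) 0%nat; auto.
  intros n _. apply (is_RInt_unique (lob_trunc n) 0 z); auto. apply IG_trunc; auto.
Qed.

Lemma exp_small eps : 0 < eps -> exists N, forall M, (M >= N)%nat -> exp (- INR M) <= eps.
Proof.
  intros he. destruct (INR_unbounded (/ eps)) as [N HN]. exists N. intros M hM.
  pose proof (exp_ineq1_le (INR M)). apply le_INR in hM.
  rewrite exp_Ropp. rewrite <- (Rinv_inv eps). apply Rinv_le_contravar.
  - apply Rinv_0_lt_compat; auto.
  - lra.
Qed.

Lemma gM_mono M t : gM (S M) t <= gM M t.
Proof.
  unfold gM. apply ln_le.
  - apply Rlt_le_trans with (exp (- INR (S M))); [apply exp_pos| apply Rmax_r].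
  - apply Rle_max_compat_l. apply Rlt_le, exp_increasing. rewrite S_INR; lra.
Qed.

Lemma FTC_log k a b : a <= b -> (forall t, a <= t <= b -> 0 < k * t) ->
  is_RInt (fun t => ln (k * t)) a b ((b * ln (k * b) - b) - (a * ln (k * a) - a)).
Proof.
  intros hab hk.
  apply (FTC_gen (fun t => ln (k * t)) (fun t => t * ln (k * t) - t)); auto.
  - intros x hx. apply cont_ln; [|apply hk; auto].
    apply (continuity_pt_scal id k x). apply derivable_continuous_pt.
    exists 1. apply derivable_pt_lim_id.
  - intros x hx. pose proof (hk x hx) as hkx.
    assert (kx0 : k * x <> 0) by lra.
    assert (x0 : x <> 0) by (intro; subst; lra).
    assert (k0 : k <> 0) by (intro; subst; lra).
    assert (D : derivable_pt_lim (fun t => t * ln (k * t) - t) x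
                 (1 * ln (k * x) + x * (/ (k * x) * (k * 1)) - 1)).
    { apply (derivable_pt_lim_minus (fun t => t * ln (k * t)) id).
      - apply (derivable_pt_lim_mult id (fun t => ln (k * t))).
        + apply derivable_pt_lim_id.
        + apply (derivable_pt_lim_comp (fun t => k * t) ln).
          * apply (derivable_pt_lim_scal id k x 1). apply derivable_pt_lim_id.
          * apply derivable_pt_lim_ln; auto.
      - apply derivable_pt_lim_id. }
    replace (ln (k * x)) with (1 * ln (k * x) + x * (/ (k * x) * (k * 1)) - 1); auto.
    field. auto.
Qed.

Definition Kf (c : R) (M : nat) (t : R) : R := ln (Rmax (c * Rabs t) (exp (- INR M))).

Lemma K_int_pos c M z : 0 < c -> exp (- INR M) / c <= z ->
  is_RInt (Kf c M) 0 z (z * ln (c * z) - z + exp (- INR M) / c).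
Proof.
  intros hc hr. set (e := exp (- INR M)) in *. set (r := e / c) in *.
  assert (he : 0 < e) by apply exp_pos.
  assert (hr0 : 0 < r) by (unfold r; apply Rdiv_lt_0_compat; auto).
  assert (cr : c * r = e) by (unfold r; field; lra).
  assert (H1 : is_RInt (Kf c M) 0 r (- INR M * (r - 0))).
  { apply is_RInt_ext_open with (fun _ => - INR M); [|apply is_RInt_const].
    intros x hx. rewrite Rmin_left, Rmax_right in hx by lra.
    unfold Kf. rewrite Rabs_right by lra. rewrite Rmax_right.
    - unfold e; rewrite ln_exp; auto.
    - fold e. rewrite <- cr. apply Rmult_le_compat_l; lra. }
  assert (H2 : is_RInt (Kf c M) r z ((z * ln (c * z) - z) - (r * ln (c * r) - r))).
  { apply is_RInt_ext with (fun t => ln (c * t)).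
    - intros x hx. rewrite Rmin_left, Rmax_right in hx by lra.
      unfold Kf. rewrite Rabs_right by lra. rewrite Rmax_left; auto.
      fold e; rewrite <- cr; apply Rmult_le_compat_l; lra.
    - apply FTC_log; auto. intros t ht. apply Rmult_lt_0_compat; lra. }
  pose proof (is_RInt_chasles _ _ _ _ _ _ H1 H2) as H.
  rewrite cr in H. unfold e in H. rewrite ln_exp in H.
  replace (z * ln (c * z) - z + r) with
    (- INR M * (r - 0) + (z * ln (c * z) - z - (r * - INR M - r))) by ring. auto.
Qed.

Lemma K_int_neg c M z : 0 < c -> exp (- INR M) / c <= - z ->
  is_RInt (Kf c M) z 0 (exp (- INR M) / c - z * ln (- c * z) + z).
Proof.
  intros hc hr. set (e := exp (- INR M)) in *. set (r := e / c) in *.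
  assert (he : 0 < e) by apply exp_pos.
  assert (hr0 : 0 < r) by (unfold r; apply Rdiv_lt_0_compat; auto).
  assert (cr : c * r = e) by (unfold r; field; lra).
  assert (H1 : is_RInt (Kf c M) (- r) 0 (- INR M * (0 - - r))).
  { apply is_RInt_ext_open with (fun _ => - INR M); [|apply is_RInt_const].
    intros x hx. rewrite Rmin_left, Rmax_right in hx by lra.
    unfold Kf. rewrite Rabs_left by lra. rewrite Rmax_right.
    - unfold e; rewrite ln_exp; auto.
    - fold e. rewrite <- cr. apply Rmult_le_compat_l; lra. }
  assert (H2 : is_RInt (Kf c M) z (- r) ((- r * ln (- c * - r) - - r) - (z * ln (- c * z) - z))).
  { apply is_RInt_ext with (fun t => ln (- c * t)).
    - intros x hx. rewrite Rmin_left, Rmax_right in hx by lra.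
      unfold Kf. rewrite Rabs_left by lra. rewrite Rmax_left.
      + f_equal; ring.
      + fold e; rewrite <- cr. replace (c * - x) with (c * (- x)) by ring.
        apply Rmult_le_compat_l; lra.
    - apply FTC_log; [lra|]. intros t ht. nra. }
  pose proof (is_RInt_chasles _ _ _ _ _ _ H2 H1) as H.
  replace (- c * - r) with (c * r) in H by ring.
  rewrite cr in H. unfold e in H. rewrite ln_exp in H.
  replace (r - z * ln (- c * z) + z) with
    (- r * - INR M - - r - (z * ln (- c * z) - z) + - INR M * (0 - - r)) by ring. auto.
Qed.

Lemma PI_gt3 : 3 < PI.
Proof. pose proof PI2_3_2; lra. Qed.

Lemma sin_bounds t : 0 <= t <= 3/2 -> t / 2 <= sin t <= t.
Proof.
  intros ht. split.
  - pose proof PI_gt3. destruct (sin_bound t 0) as [Hs _]; try lra.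
    unfold sin_approx in Hs. simpl in Hs. unfold sin_term in Hs. simpl in Hs.
    apply Rle_trans with (2 := Hs). nra.
  - destruct (Req_dec t 0) as [->|h]. rewrite sin_0; lra.
    left; apply sin_lt_x; lra.
Qed.

Lemma abs_sin_bounds t : Rabs t <= 3/2 -> Rabs t <= Rabs (2 * sin t) <= 2 * Rabs t.
Proof.
  intros ht. destruct (Rle_or_lt 0 t).
  - rewrite Rabs_right in * by lra. pose proof (sin_bounds t ltac:(lra)).
    rewrite Rabs_right by lra. lra.
  - rewrite Rabs_left in * by lra. pose proof (sin_bounds (- t) ltac:(lra)).
    rewrite sin_neg in H0. rewrite Rabs_left by lra. lra.
Qed.

Lemma K_le_gM M t : Rabs t <= 3/2 -> Kf 1 M t <= gM M t <= Kf 2 M t.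
Proof.
  intros ht. pose proof (abs_sin_bounds t ht). pose proof (exp_pos (- INR M)).
  unfold Kf, gM. split; apply ln_le.
  - apply Rlt_le_trans with (exp (- INR M)); [auto|apply Rmax_r].
  - apply Rle_max_compat_r. lra.
  - apply Rlt_le_trans with (exp (- INR M)); [auto|apply Rmax_r].
  - apply Rle_max_compat_r. lra.
Qed.

Lemma dec_le (u : nat -> R) : Un_decreasing u -> forall n m, (n <= m)%nat -> u m <= u n.
Proof.
  intros H n m hnm. induction hnm; [lra|]. apply Rle_trans with (u m); [apply H|auto].
Qed.

Lemma grow_le (u : nat -> R) : Un_growing u -> forall n m, (n <= m)%nat -> u n <= u m.
Proof.
  intros H n m hnm. induction hnm; [lra|]. apply Rle_trans with (u m); [auto|apply H].
Qed.

Lemma lim_le_dec u l : Un_decreasing u -> Un_cv u l -> forall n, l <= u n.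
Proof.
  intros Hd Hc n. destruct (Rle_or_lt l (u n)) as [h|h]; auto.
  destruct (Hc (l - u n) ltac:(lra)) as [N HN].
  assert (h1 : (max N n >= N)%nat) by lia. assert (h2 : (n <= max N n)%nat) by lia.
  specialize (HN (max N n) h1). pose proof (dec_le u Hd n (max N n) h2).
  unfold Rdist in HN. rewrite Rabs_left in HN; lra.
Qed.

Lemma lim_ge_grow u l : Un_growing u -> Un_cv u l -> forall n, u n <= l.
Proof.
  intros Hd Hc n. destruct (Rle_or_lt (u n) l) as [h|h]; auto.
  destruct (Hc (u n - l) ltac:(lra)) as [N HN].
  assert (h1 : (max N n >= N)%nat) by lia. assert (h2 : (n <= max N n)%nat) by lia.
  specialize (HN (max N n) h1). pose proof (grow_le u Hd n (max N n) h2).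
  unfold Rdist in HN. rewrite Rabs_right in HN; lra.
Qed.

Lemma IG_dec z : 0 <= z -> Un_decreasing (fun M => IG M z).
Proof.
  intros hz M. apply (is_RInt_le (gM (S M)) (gM M) 0 z); auto; try apply IG_spec.
  intros; apply gM_mono.
Qed.

Lemma IG_grow z : z <= 0 -> Un_growing (fun M => IG M z).
Proof.
  intros hz M. cut (- IG (S M) z <= - IG M z); [lra|].
  apply (is_RInt_le (gM (S M)) (gM M) z 0); auto; try (apply is_RInt_swap, IG_spec).
  intros. apply gM_mono.
Qed.

Lemma IG_cv_pos z : 0 < z <= 3/2 ->
  exists l, Un_cv (fun M => IG M z) l /\ l <= z * ln (2 * z) - z.
Proof.
  intros hz.
  assert (Hlow : forall n, z * ln (1 * z) - z <= IG n z).
  { intros n. destruct (exp_small z ltac:(lra)) as [N HN].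
    set (M := max n N).
    apply Rle_trans with (IG M z).
    2:{ apply (dec_le (fun M => IG M z)); [apply IG_dec; lra| unfold M; lia]. }
    assert (hM : exp (- INR M) / 1 <= z) by (rewrite Rdiv_1_r; apply HN; unfold M; lia).
    pose proof (K_int_pos 1 M z ltac:(lra) hM) as HK.
    pose proof (is_RInt_le (Kf 1 M) (gM M) 0 z _ _ ltac:(lra) HK (IG_spec M z)) as HH.
    assert (0 < exp (- INR M) / 1) by (rewrite Rdiv_1_r; apply exp_pos).
    enough (z * ln (1 * z) - z + exp (- INR M) / 1 <= IG M z) by lra.
    apply HH. intros x hx. apply K_le_gM. rewrite Rabs_right; lra. }
  assert (Hlb : has_lb (fun M => IG M z)).
  { exists (- (z * ln (1 * z) - z)). intros x [i ->]. unfold opp_seq.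
    specialize (Hlow i). lra. }
  destruct (decreasing_cv _ (IG_dec z ltac:(lra)) Hlb) as [l Hl].
  exists l. split; auto.
  assert (Hup : forall M, exp (- INR M) / 2 <= z -> l <= z * ln (2 * z) - z + exp (- INR M) / 2).
  { intros M hM. apply Rle_trans with (IG M z).
    - apply (lim_le_dec (fun M => IG M z)); auto. apply IG_dec; lra.
    - apply (is_RInt_le (gM M) (Kf 2 M) 0 z); auto; try lra.
      + apply IG_spec.
      + apply K_int_pos; auto; lra.
      + intros x hx. apply K_le_gM. rewrite Rabs_right; lra. }
  destruct (Rle_or_lt l (z * ln (2 * z) - z)) as [h|h]; auto.
  destruct (exp_small (Rmin z (l - (z * ln (2 * z) - z))) ltac:(apply Rmin_pos; lra)) as [N HN].
  specialize (HN N (le_n N)). pose proof (Rmin_l z (l - (z * ln (2 * z) - z))).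
  pose proof (Rmin_r z (l - (z * ln (2 * z) - z))). pose proof (exp_pos (- INR N)).
  specialize (Hup N ltac:(lra)). lra.
Qed.

Lemma sin_small_neg t : - (PI / 6) < t < 0 -> Rabs (2 * sin t) <= 1.
Proof.
  intros ht. pose proof PI_gt3. pose proof PI_4.
  assert (h1 : sin (- (PI / 6)) < sin t).
  { apply sin_increasing_1; lra. }
  rewrite sin_neg, sin_PI6 in h1.
  pose proof (sin_lt_0_var t ltac:(lra) ltac:(lra)).
  rewrite Rabs_left; lra.
Qed.

Lemma IG_cv_neg w : -3/2 <= w < 0 ->
  exists l, Un_cv (fun M => IG M w) l /\ (- (PI / 6) < w -> 0 <= l).
Proof.
  intros hw.
  assert (Hup : forall n, IG n w <= w * ln (- 1 * w) - w).
  { intros n. destruct (exp_small (- w) ltac:(lra)) as [N HN].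
    set (M := max n N).
    apply Rle_trans with (IG M w).
    { apply (grow_le (fun M => IG M w)); [apply IG_grow; lra| unfold M; lia]. }
    assert (hM : exp (- INR M) / 1 <= - w) by (rewrite Rdiv_1_r; apply HN; unfold M; lia).
    pose proof (K_int_neg 1 M w ltac:(lra) hM) as HK.
    pose proof (is_RInt_le (Kf 1 M) (gM M) w 0 _ _ ltac:(lra) HK
                  (is_RInt_swap _ _ _ _ (IG_spec M w))) as HH.
    assert (0 < exp (- INR M) / 1) by (rewrite Rdiv_1_r; apply exp_pos).
    enough (exp (- INR M) / 1 - w * ln (- 1 * w) + w <= - IG M w) by lra.
    apply HH. intros x hx. apply K_le_gM. rewrite Rabs_left; lra. }
  assert (Hub : has_ub (fun M => IG M w)).
  { exists (w * ln (- 1 * w) - w). intros x [i ->]. apply Hup. }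
  destruct (growing_cv _ (IG_grow w ltac:(lra)) Hub) as [l Hl].
  exists l. split; auto. intros hw6.
  apply Rle_trans with (IG 0 w).
  2:{ apply (lim_ge_grow (fun M => IG M w)); auto. apply IG_grow; lra. }
  assert (HH := is_RInt_le (gM 0) (fun _ => 0) w 0 _ _ ltac:(lra)
     (is_RInt_swap _ _ _ _ (IG_spec 0 w)) (is_RInt_const 0 w 0)).
  cut (- IG 0 w <= 0 * (0 - w)); [lra|]. apply HH.
  intros x hx. unfold gM. rewrite <- ln_1. apply ln_le.
  + apply Rlt_le_trans with (exp (- INR 0)); [apply exp_pos|apply Rmax_r].
  + apply Rmax_lub.
    * apply sin_small_neg; lra.
    * simpl. rewrite Ropp_0, exp_0; lra.
Qed.

Lemma e_lb : 2.63 < exp 1.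
Proof.
  assert (H: exp 1 = (exp (1/16))^16).
  { rewrite <- (Rpower_pow 16 (exp (1/16))) by apply exp_pos.
    unfold Rpower. rewrite ln_exp. f_equal. simpl. lra. }
  rewrite H. apply Rlt_le_trans with ((17/16)^16).
  - simpl; lra.
  - apply pow_incr. split. lra. pose proof (exp_ineq1 (1/16)). lra.
Qed.

Lemma Lob_pos z : 0 < z <= 1.315 -> 0 <= Lobachevsky z.
Proof.
  intros hz. destruct (IG_cv_pos z ltac:(lra)) as [l [Hl Hb]].
  pose proof PI_gt3. rewrite (Lob_char z l); [|lra|auto].
  assert (ln (2 * z) <= 1).
  { rewrite <- (ln_exp 1). apply ln_le; [lra|]. pose proof e_lb; lra. }
  nra.
Qed.

Lemma Lob_neg w : - (PI / 6) < w < 0 -> Lobachevsky w <= 0.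
Proof.
  intros hw. pose proof PI_4. pose proof PI_gt3.
  destruct (IG_cv_neg w ltac:(lra)) as [l [Hl Hs]].
  rewrite (Lob_char w l); [|lra|auto]. specialize (Hs ltac:(lra)). lra.
Qed.

Lemma IG_cv z : -3/2 <= z <= 3/2 -> z <> 0 -> exists l, Un_cv (fun M => IG M z) l.
Proof.
  intros hz h0. destruct (Rlt_or_le 0 z).
  - destruct (IG_cv_pos z ltac:(lra)) as [l [Hl _]]; eauto.
  - destruct (IG_cv_neg z ltac:(lra)) as [l [Hl _]]; eauto.
Qed.

Lemma sin_lb_int p q : p < q -> -3/2 <= p -> q <= 3/2 -> (0 < p \/ q < 0) ->
  exists m, 0 < m /\ forall t, p <= t <= q -> m <= Rabs (2 * sin t).
Proof.
  intros hpq hp hq hs. pose proof PI2_3_2.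
  destruct hs as [hs|hs].
  - exists (2 * sin p). split.
    + pose proof (sin_gt_0 p hs ltac:(lra)); lra.
    + intros t ht. pose proof (sin_gt_0 p hs ltac:(lra)).
      assert (sin p <= sin t).
      { destruct (Req_dec p t) as [->|hne]; [lra|]. left; apply sin_increasing_1; lra. }
      rewrite Rabs_right; lra.
  - exists (- (2 * sin q)). split.
    + pose proof (sin_lt_0_var q ltac:(lra) hs); lra.
    + intros t ht. pose proof (sin_lt_0_var q ltac:(lra) hs).
      assert (sin t <= sin q).
      { destruct (Req_dec t q) as [->|hne]; [lra|]. left; apply sin_increasing_1; lra. }
      rewrite Rabs_left; lra.
Qed.

Lemma Un_cv_const c : Un_cv (fun _ => c) c.
Proof. intros eps he. exists 0%nat. intros. unfold Rdist. rewrite Rminus_diag, Rabs_R0; lra. Qed.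

Lemma Lob_diff p q y J : p < q -> -3/2 <= p -> q <= 3/2 -> (0 < p \/ q < 0) ->
  p <= y <= q -> is_RInt lob_integrand p y J -> Lobachevsky y = Lobachevsky p - J.
Proof.
  intros hpq hp hq hs hy HJ. pose proof PI_gt3.
  assert (hp0 : p <> 0) by lra. assert (hy0 : y <> 0) by lra.
  destruct (IG_cv p ltac:(lra) hp0) as [lp Hp].
  destruct (IG_cv y ltac:(lra) hy0) as [ly Hy].
  destruct (sin_lb_int p q hpq hp hq hs) as [m [hm Hm]].
  destruct (exp_small m hm) as [N HN].
  assert (E : forall M, (M >= N)%nat -> IG M p + J = IG M y).
  { intros M hM. apply (is_RInt_unique (gM M) 0 y); [|apply IG_spec].
    apply is_RInt_chasles with p; [apply IG_spec|].
    revert HJ; apply is_RInt_ext. intros x hx.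
    assert (p <= x <= y).
    { unfold Rmin, Rmax in hx; destruct (Rle_dec p y); lra. }
    unfold lob_integrand, gM. rewrite Rmax_left; auto.
    apply Rle_trans with m; [apply HN; auto| apply Hm; lra]. }
  assert (C : Un_cv (fun M => IG M y) (lp + J)).
  { apply Un_cv_ext_ev with (fun M => IG M p + J) N; auto.
    apply CV_plus; auto. apply Un_cv_const. }
  rewrite (Lob_char y (lp + J)), (Lob_char p lp); auto; try lra.
Qed.

Lemma Lob_deriv_gen p q z : p < z < q -> -3/2 <= p -> q <= 3/2 -> (0 < p \/ q < 0) ->
  derivable_pt_lim Lobachevsky z (- lob_integrand z).
Proof.
  intros hz hp hq hs.
  assert (h : p <= q) by lra.
  destruct (sin_lb_int p q ltac:(lra) hp hq hs) as [m [hm Hm]].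
  assert (C0 : forall x, p <= x <= q -> continuity_pt lob_integrand x).
  { intros x hx. unfold lob_integrand. apply cont_ln. apply cont_abs2sin.
    specialize (Hm x hx). lra. }
  set (P := primitive h (FTC_P1 h C0)).
  pose proof (RiemannInt_P27 h C0 hz) as D.
  fold P in D.
  assert (E : forall y, p < y < q -> Lobachevsky p - P y = Lobachevsky y).
  { intros y hy. symmetry. apply (Lob_diff p q); auto; try lra.
    unfold P, primitive. destruct (Rle_dec p y) as [r1|]; [|lra].
    destruct (Rle_dec y q) as [r2|]; [|lra].
    exists (FTC_P1 h C0 r1 r2). reflexivity. }
  apply derivable_pt_lim_locally_ext with (fun y => Lobachevsky p - P y) p q; auto.
  replace (- lob_integrand z) with (0 - lob_integrand z) by ring.
  apply (derivable_pt_lim_minus (fct_cte (Lobachevsky p)) P).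
  - apply derivable_pt_lim_const.
  - exact D.
Qed.

Lemma Lob_deriv z : (0 < z < 1.4 \/ -1.4 < z < 0) ->
  derivable_pt_lim Lobachevsky z (- lob_integrand z).
Proof.
  intros [hz|hz].
  - apply (Lob_deriv_gen (z/2) ((z + 1.4)/2)); lra.
  - apply (Lob_deriv_gen ((z - 1.4)/2) (z/2)); lra.
Qed.

Lemma PI_ub : PI <= 3.1416.
Proof.
  destruct (PI_2_3_7_ineq 2) as [_ H].
  unfold tg_alt, PI_2_3_7_tg, Ratan_seq in H. simpl in H. lra.
Qed.

Lemma sin_lt_inv a b : -(PI/2) <= a <= PI/2 -> -(PI/2) <= b <= PI/2 -> sin a < sin b -> a < b.
Proof.
  intros ha hb hs. destruct (Rlt_or_le a b) as [h|h]; auto.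
  destruct (Req_dec a b) as [->|hne]; [lra|].
  assert (sin b < sin a) by (apply sin_increasing_1; lra). lra.
Qed.

Lemma th_props x : 0 < x <= PI / 5 ->
  sin (PI / 2 - acos (1 / (2 * cos x))) = 1 / (2 * cos x) /\ 0 < cos x /\
  PI / 6 < PI / 2 - acos (1 / (2 * cos x)) /\ PI / 2 - acos (1 / (2 * cos x)) < 0.68 /\
  x < PI / 2 - acos (1 / (2 * cos x)).
Proof.
  intros hx. pose proof PI_ub as hpu. pose proof PI_gt3 as hpl.
  assert (hc0 : 0 < cos x) by (apply cos_gt_0; lra).
  assert (hc1 : cos x < 1) by (rewrite <- cos_0; apply cos_decreasing_1; lra).
  assert (hcb : 1 - x * x / 2 <= cos x).
  { destruct (cos_bound x 0) as [Hc _]; try lra.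
    unfold cos_approx in Hc; simpl in Hc; unfold cos_term in Hc; simpl in Hc. lra. }
  set (s := 1 / (2 * cos x)).
  assert (hsc : s * (2 * cos x) = 1) by (unfold s; field; lra).
  assert (hs1 : 1/2 < s) by nra.
  assert (hx2 : x <= 0.62832) by lra.
  assert (hs2 : s <= 0.623) by nra.
  assert (E : PI / 2 - acos s = asin s) by (rewrite asin_acos; lra).
  rewrite E. pose proof (sin_asin s ltac:(lra)) as Hss. pose proof (asin_bound s) as Hb.
  repeat split; auto.
  - apply sin_lt_inv; try lra. rewrite sin_PI6. lra.
  - apply sin_lt_inv; try lra.
    destruct (sin_bound 0.68 0) as [Hc _]; try lra.
    unfold sin_approx in Hc; simpl in Hc; unfold sin_term in Hc; simpl in Hc. lra.
  - apply sin_lt_inv; try lra. rewrite Hss.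
    assert (h2 : sin (2 * x) < 1).
    { rewrite <- sin_PI2. apply sin_increasing_1; lra. }
    rewrite sin_2a in h2. nra.
Qed.

Definition Hf (t x : R) : R :=
  2 * Lobachevsky t + Lobachevsky (t + x) + Lobachevsky (t - x) - Lobachevsky (2 * t - PI / 2).

Lemma vol_eq n : vol_Lobell n = INR n / 2 * Hf (theta n) (PI / INR n).
Proof. reflexivity. Qed.

Lemma deriv_affine a b z l : derivable_pt_lim Lobachevsky (a * z + b) l ->
  derivable_pt_lim (fun t => Lobachevsky (a * t + b)) z (l * a).
Proof.
  intros H.
  assert (D : derivable_pt_lim (fun t => a * t + b) z (a * 1 + 0)).
  { apply (derivable_pt_lim_plus (mult_real_fct a id) (fct_cte b)).
    - apply derivable_pt_lim_scal, derivable_pt_lim_id.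
    - apply derivable_pt_lim_const. }
  rewrite Rmult_1_r, Rplus_0_r in D.
  exact (derivable_pt_lim_comp (fun t => a * t + b) Lobachevsky z a l D H).
Qed.

Lemma Lob_d' z : (0 < z < 1.4 \/ -1.4 < z < 0) -> forall a b y, a * y + b = z ->
  derivable_pt_lim Lobachevsky (a * y + b) (- lob_integrand z).
Proof. intros hz a b y <-. apply Lob_deriv; auto. Qed.

Lemma H_deriv_t t x : 0 < t < 1.4 -> 0 < t + x < 1.4 -> 0 < t - x < 1.4 -> -1.4 < 2 * t - PI / 2 < 0 ->
  derivable_pt_lim (fun s => Hf s x) t
   (2 * - lob_integrand t + - lob_integrand (t + x) * 1 + - lob_integrand (t - x) * 1
     - - lob_integrand (2 * t - PI / 2) * 2).
Proof.
  intros h1 h2 h3 h4.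
  apply derivable_pt_lim_ext with
    (fun s => 2 * Lobachevsky s + Lobachevsky (1 * s + x) + Lobachevsky (1 * s + - x)
              - Lobachevsky (2 * s + - (PI / 2))).
  { intros s; unfold Hf. replace (1 * s + x) with (s + x) by ring.
    replace (1 * s + - x) with (s - x) by ring.
    replace (2 * s + - (PI / 2)) with (2 * s - PI / 2) by ring. reflexivity. }
  apply (derivable_pt_lim_minus
     (fun s => 2 * Lobachevsky s + Lobachevsky (1 * s + x) + Lobachevsky (1 * s + - x))
     (fun s => Lobachevsky (2 * s + - (PI / 2)))).
  - apply (derivable_pt_lim_plus
      (fun s => 2 * Lobachevsky s + Lobachevsky (1 * s + x))
      (fun s => Lobachevsky (1 * s + - x))).
    + apply (derivable_pt_lim_plus (fun s => 2 * Lobachevsky s)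
         (fun s => Lobachevsky (1 * s + x))).
      * apply (derivable_pt_lim_scal Lobachevsky 2). apply Lob_deriv; lra.
      * apply deriv_affine. apply Lob_d'; [lra|ring].
    + apply deriv_affine. apply Lob_d'; [lra|ring].
  - apply deriv_affine. apply Lob_d'; [lra|ring].
Qed.

Lemma H_deriv_x t x : 0 < t + x < 1.4 -> 0 < t - x < 1.4 ->
  derivable_pt_lim (fun y => Hf t y) x
   (- lob_integrand (t + x) * 1 + - lob_integrand (t - x) * -1).
Proof.
  intros h2 h3.
  apply derivable_pt_lim_ext with
    (fun y => 2 * Lobachevsky t + Lobachevsky (1 * y + t) + Lobachevsky (-1 * y + t)
              - Lobachevsky (2 * t - PI / 2)).
  { intros s; unfold Hf. replace (1 * s + t) with (t + s) by ring.
    replace (-1 * s + t) with (t - s) by ring. reflexivity. }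
  replace (- lob_integrand (t + x) * 1 + - lob_integrand (t - x) * -1) with
    (0 + - lob_integrand (t + x) * 1 + - lob_integrand (t - x) * -1 - 0) by ring.
  apply (derivable_pt_lim_minus
     (fun y => 2 * Lobachevsky t + Lobachevsky (1 * y + t) + Lobachevsky (-1 * y + t))
     (fct_cte (Lobachevsky (2 * t - PI / 2)))).
  - apply (derivable_pt_lim_plus
      (fun y => 2 * Lobachevsky t + Lobachevsky (1 * y + t))
      (fun y => Lobachevsky (-1 * y + t))).
    + apply (derivable_pt_lim_plus (fct_cte (2 * Lobachevsky t))
         (fun y => Lobachevsky (1 * y + t))).
      * apply derivable_pt_lim_const.
      * apply deriv_affine. apply Lob_d'; [lra|ring].
    + apply deriv_affine. apply Lob_d'; [lra|ring].
  - apply derivable_pt_lim_const.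
Qed.

Lemma ell_pos_eq a : 0 < a <= 3/2 -> lob_integrand a = ln (2 * sin a).
Proof.
  intros ha. pose proof PI_gt3. unfold lob_integrand.
  rewrite Rabs_right; auto. pose proof (sin_gt_0 a ltac:(lra) ltac:(lra)). lra.
Qed.

Lemma ell_mono_pos a b : 0 < a <= b -> b <= 3/2 -> lob_integrand a <= lob_integrand b.
Proof.
  intros hab hb. pose proof PI2_3_2. pose proof PI_gt3.
  rewrite !ell_pos_eq by lra. apply ln_le.
  - pose proof (sin_gt_0 a ltac:(lra) ltac:(lra)). lra.
  - destruct (Req_dec a b) as [->|hne]; [lra|].
    assert (sin a < sin b) by (apply sin_increasing_1; lra). lra.
Qed.

Lemma ell_strict_pos a b : 0 < a < b -> b <= 3/2 -> lob_integrand a < lob_integrand b.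
Proof.
  intros hab hb. pose proof PI2_3_2. pose proof PI_gt3.
  rewrite !ell_pos_eq by lra. apply ln_increasing.
  - pose proof (sin_gt_0 a ltac:(lra) ltac:(lra)). lra.
  - assert (sin a < sin b) by (apply sin_increasing_1; lra). lra.
Qed.

Lemma ell_mono_neg a b : -3/2 <= a <= b -> b < 0 -> lob_integrand b <= lob_integrand a.
Proof.
  intros hab hb. pose proof PI2_3_2. pose proof PI_gt3. unfold lob_integrand.
  pose proof (sin_lt_0_var b ltac:(lra) hb).
  apply ln_le.
  - apply Rabs_pos_lt. lra.
  - assert (sin a <= sin b).
    { destruct (Req_dec a b) as [->|hne]; [lra|]. left; apply sin_increasing_1; lra. }
    rewrite !Rabs_left; lra.
Qed.

Lemma crit t x : 0 < x -> 0 < cos x -> sin t = 1 / (2 * cos x) -> 0 < t - x ->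
  t + x <= 3/2 -> t < 0.7 ->
  2 * - lob_integrand t + - lob_integrand (t + x) * 1 + - lob_integrand (t - x) * 1
     - - lob_integrand (2 * t - PI / 2) * 2 = 0.
Proof.
  intros hx hc hs h1 h2 h3. pose proof PI2_3_2. pose proof PI_gt3.
  rewrite !ell_pos_eq by lra.
  assert (E : lob_integrand (2 * t - PI / 2) = ln (2 * cos (2 * t))).
  { unfold lob_integrand. rewrite sin_minus, sin_PI2, cos_PI2.
    assert (0 < cos (2 * t)) by (apply cos_gt_0; lra).
    rewrite Rabs_left by lra. f_equal; ring. }
  rewrite E.
  assert (p1 : 0 < sin t) by (apply sin_gt_0; lra).
  assert (p2 : 0 < sin (t + x)) by (apply sin_gt_0; lra).
  assert (p3 : 0 < sin (t - x)) by (apply sin_gt_0; lra).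
  assert (p4 : 0 < cos (2 * t)) by (apply cos_gt_0; lra).
  cut (ln (2 * cos (2 * t) * (2 * cos (2 * t))) =
       ln (2 * sin t * (2 * sin t) * (2 * sin (t + x)) * (2 * sin (t - x)))).
  { rewrite !ln_mult by (repeat apply Rmult_lt_0_compat; lra). lra. }
  f_equal.
  rewrite cos_2a_sin, sin_plus, sin_minus.
  pose proof (sin2_cos2 t) as e1. pose proof (sin2_cos2 x) as e2. unfold Rsqr in *.
  set (S := sin t) in *. set (C := cos x) in *. set (Ct := cos t) in *. set (Sx := sin x) in *.
  assert (hSC : 2 * S * C = 1) by (rewrite hs; field; lra).
  replace ((S * C + Ct * Sx) * (S * C - Ct * Sx)) with (S*S*C*C - (Ct*Ct)*(Sx*Sx)) by ring.
  replace (2 * S * (2 * S) * (2 * (S * C + Ct * Sx)) * (2 * (S * C - Ct * Sx))) with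
    (16 * S * S * (S*S*C*C - (Ct*Ct)*(Sx*Sx))) by ring.
  replace (Ct * Ct) with (1 - S * S) by lra. replace (Sx * Sx) with (1 - C * C) by lra.
  replace (2 * (1 - 2 * S * S) * (2 * (1 - 2 * S * S))) with
    (16 * S * S * (S * S * C * C - (1 - S * S) * (1 - C * C)) + 4 * (1 - (2 * S * C) * (2 * S * C)))
    by ring.
  rewrite hSC. ring.
Qed.

Theorem mainTheorem3 :
  forall n m : nat, (5 <= n)%nat -> (n < m)%nat -> vol_Lobell n < vol_Lobell m.
Proof.
  intros n m hn hm.
  rewrite !vol_eq.
  pose proof PI_ub as hpu. pose proof PI_gt3 as hpl. pose proof PI2_3_2 as hp2.
  assert (Hn : 5 <= INR n) by (replace 5 with (INR 5) by (simpl; lra); apply le_INR; lia).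
  assert (Hm : INR n < INR m) by (apply lt_INR; lia).
  set (x1 := PI / INR m). set (x2 := PI / INR n).
  assert (hx2 : x2 <= PI / 5).
  { unfold x2, Rdiv. apply Rmult_le_compat_l; [lra|]. apply Rinv_le_contravar; lra. }
  assert (hx12 : x1 < x2).
  { unfold x1, x2, Rdiv. apply Rmult_lt_compat_l; [lra|]. apply Rinv_lt_contravar; nra. }
  assert (hx1 : 0 < x1) by (unfold x1; apply Rdiv_lt_0_compat; lra).
  unfold theta. fold x1 x2.
  destruct (th_props x1 ltac:(lra)) as [s1 [c1 [a1 [b1 d1]]]].
  destruct (th_props x2 ltac:(lra)) as [s2 [c2 [a2 [b2 d2]]]].
  set (t1 := PI / 2 - acos (1 / (2 * cos x1))) in *.
  set (t2 := PI / 2 - acos (1 / (2 * cos x2))) in *.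
  assert (ht12 : t1 < t2).
  { apply sin_lt_inv; try lra. rewrite s1, s2.
    assert (cos x2 < cos x1) by (apply cos_decreasing_1; lra).
    apply Rmult_lt_reg_r with (2 * cos x1 * (2 * cos x2)); [nra|].
    field_simplify; try lra. }
  assert (HA : Hf t2 x1 <= Hf t1 x1).
  { destruct (MVT_cor2 (fun s => Hf s x1)
      (fun s => 2 * - lob_integrand s + - lob_integrand (s + x1) * 1 + - lob_integrand (s - x1) * 1
         - - lob_integrand (2 * s - PI / 2) * 2) t1 t2 ht12) as [c [Ec hc]].
    { intros c hc. apply H_deriv_t; lra. }
    pose proof (crit t1 x1 hx1 c1 s1 ltac:(lra) ltac:(lra) ltac:(lra)) as Z.
    pose proof (ell_mono_pos t1 c ltac:(lra) ltac:(lra)).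
    pose proof (ell_mono_pos (t1 + x1) (c + x1) ltac:(lra) ltac:(lra)).
    pose proof (ell_mono_pos (t1 - x1) (c - x1) ltac:(lra) ltac:(lra)).
    pose proof (ell_mono_neg (2 * t1 - PI / 2) (2 * c - PI / 2) ltac:(lra) ltac:(lra)).
    assert (Hd : 2 * - lob_integrand c + - lob_integrand (c + x1) * 1 + - lob_integrand (c - x1) * 1
         - - lob_integrand (2 * c - PI / 2) * 2 <= 0) by lra.
    nra. }
  assert (HB : Hf t2 x2 < Hf t2 x1).
  { destruct (MVT_cor2 (fun y => Hf t2 y)
      (fun y => - lob_integrand (t2 + y) * 1 + - lob_integrand (t2 - y) * -1) x1 x2 hx12)
      as [c [Ec hc]].
    { intros c hc. apply H_deriv_x; lra. }
    pose proof (ell_strict_pos (t2 - c) (t2 + c) ltac:(lra) ltac:(lra)).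
    nra. }
  assert (HP : 0 <= Hf t2 x2).
  { unfold Hf.
    pose proof (Lob_pos t2 ltac:(lra)).
    pose proof (Lob_pos (t2 + x2) ltac:(lra)).
    pose proof (Lob_pos (t2 - x2) ltac:(lra)).
    pose proof (Lob_neg (2 * t2 - PI / 2) ltac:(lra)).
    lra. }
  nra.
Qed.
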